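(* Let $m\ge 1$ and $n\geq 2$ be integers. Then $$SO(Q(m,n))=m\Big(\frac{(m+n-2)(m-1)}{2}+(n-1)^2\big(\tfrac{n}{2}-1\big)\Big)\sqrt{2}+m(n-1)\sqrt{(m+n-2)^2+(n-1)^2}.$$
   Context: For a finite simple graph $G$ and vertex $u$, $d_u$ is the degree of $u$ in $G$, and the Sombor index is $SO(G)=\sum_{uv\in E(G)}\sqrt{d_u^2+d_v^2}$. The graph $Q(m,n)$ is obtained from the complete graph $K_m$ and $m$ pairwise disjoint copies of the complete graph $K_n$ by identifying each vertex of $K_m$ with a vertex of its own (unique) copy of $K_n$. *)

(* Defs.v *)
From HB Require Import structures.
From mathcomp Require Import all_boot all_order all_algebra.
Set Implicit Arguments. Unset Strict Implicit. Unset Printing Implicit Defensive.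
Import Order.TTheory GRing.Theory Num.Theory.
Local Open Scope ring_scope.

Definition deg (T : finType) (e : rel T) (u : T) : nat := #|[set v | e u v]|.

(* Sombor index: sum over edges uv of sqrt(d_u^2 + d_v^2).  Each edge is
   counted once by summing over ordered adjacent pairs (u,v) with u before v
   in the enumeration of T. *)
Definition sombor (R : rcfType) (T : finType) (e : rel T) : R :=
  \sum_(p : T * T | e p.1 p.2 && (enum_rank p.1 < enum_rank p.2)%N)
     Num.sqrt ((deg e p.1)%:R ^+ 2 + (deg e p.2)%:R ^+ 2).

(* The graph Q(m,n): vertices (i,j), i < m indexes the copy of K_n,
   j < n the vertex inside it; vertex (i,0) is the vertex of copy i
   identified with vertex i of K_m. *)
Definition Qrel (m n : nat) : rel ('I_m * 'I_n) :=
  fun x y =>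
    ((x.1 == y.1) && (x.2 != y.2))
    || [&& x.1 != y.1, nat_of_ord x.2 == 0%N & nat_of_ord y.2 == 0%N].

Arguments Qrel m n : clear implicits.
Arguments sombor R {T} e.

(* Main.v *)
Require Import Defs.
From HB Require Import structures.
From mathcomp Require Import all_boot all_order all_algebra.
From mathcomp Require Import ring lra zify.
Set Implicit Arguments. Unset Strict Implicit. Unset Printing Implicit Defensive.
Import Order.TTheory GRing.Theory Num.Theory.
Local Open Scope ring_scope.

Section Q.
Variable R : rcfType.
Variables m n : nat.
Local Notation T := ('I_m.+1 * 'I_n.+2)%type.
Local Notation e := (Qrel m.+1 n.+2).

Lemma Qsym (x y : T) : e x y = e y x.
Proof.
rewrite /Qrel (eq_sym x.1) (eq_sym x.2).
by case: (y.1 == x.1); case: (nat_of_ord x.2 == 0%N); case: (nat_of_ord y.2 == 0%N).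
Qed.

Lemma Qirr (x : T) : e x x = false.
Proof. by rewrite /Qrel !eqxx. Qed.

Lemma sum_neq p (k : 'I_p) (h : 'I_p -> R) :
  \sum_(j | j != k) h j = \sum_j h j - h k.
Proof. by rewrite [\sum_j h j](bigD1 k) //= addrC addrK. Qed.

Lemma sc p (c : R) : \sum_(j < p) c = c *+ p.
Proof. by rewrite sumr_const card_ord. Qed.

Lemma nbr (h : T -> R) x : \sum_(y | e x y) h y =
  \sum_(j | j != x.2) h (x.1, j) +
  (if nat_of_ord x.2 == 0%N then \sum_(i | i != x.1) h (i, ord0) else 0).
Proof.
rewrite big_mkcond /=.
transitivity (\sum_y ((if (y.1 == x.1) && (y.2 != x.2) then h (y.1, y.2) else 0) +
  (if [&& y.1 != x.1, nat_of_ord x.2 == 0%N & nat_of_ord y.2 == 0%N] then h (y.1, y.2) else 0))).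
  apply: eq_bigr => -[y1 y2] _ /=; set y := (y1, y2); rewrite /Qrel (eq_sym x.1) (eq_sym x.2).
  by case: (y1 == x.1); rewrite /= ?orbF ?andbF; case: ifP; rewrite ?addr0 ?add0r.
rewrite big_split /=; congr (_ + _).
  rewrite -(pair_bigA _ (fun i j => if (i == x.1) && (j != x.2) then h (i, j) else 0)) /=.
  rewrite (bigD1 x.1) //= [X in _ + X]big1 ?addr0; last first.
    by move=> i /negbTE ->; rewrite big1.
  by rewrite eqxx /= -big_mkcond.
rewrite -(pair_bigA _ (fun i j => if [&& i != x.1, nat_of_ord x.2 == 0%N & nat_of_ord j == 0%N] then h (i, j) else 0)) /=.
case: ifP => x20.
  rewrite [RHS]big_mkcond /=; apply: eq_bigr => i _.
  rewrite big_ord_recl /= eqxx andbT big1 ?addr0 //.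
  by move=> j _; rewrite !andbF.
by rewrite big1 // => i _; rewrite big1 // => j _; rewrite andbF.
Qed.

Lemma degE (x : T) : (deg e x)%:R = (n.+1)%:R + (if nat_of_ord x.2 == 0%N then m%:R else 0) :> R.
Proof.
rewrite /deg -sumr_const (eq_bigl (fun v => e x v)); last by move=> v; rewrite inE.
rewrite nbr sum_neq sc.
case: ifP => _; rewrite ?sum_neq ?sc; rewrite -?[(1:R) *+ _]/(_%:R) ?natrS; ring.
Qed.

Definition D (j : 'I_n.+2) : R := n.+1%:R + (if nat_of_ord j == 0%N then m%:R else 0).
Definition S (a b : R) := Num.sqrt (a ^+ 2 + b ^+ 2).

Lemma D0 : D ord0 = n.+1%:R + m%:R. Proof. by []. Qed.
Lemma Dl k : D (lift ord0 k) = n.+1%:R. Proof. by rewrite /D /= addr0. Qed.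

Lemma sum_D (c : R -> R) : \sum_j c (D j) = c (n.+1%:R + m%:R) + c (n.+1%:R) *+ n.+1.
Proof. by rewrite big_ord_recl D0; under eq_bigr do rewrite Dl; rewrite sc. Qed.

Lemma half : sombor R e *+ 2 = \sum_(p | e p.1 p.2) S (D p.1.2) (D p.2.2).
Proof.
have dE (x : T) : (deg e x)%:R = D x.2 by rewrite degE.
rewrite /sombor mulr2n [RHS](bigID (fun p : T * T => (enum_rank p.1 < enum_rank p.2)%N) (fun p : T * T => e p.1 p.2)) /=.
congr (_ + _); rewrite /S.
  by apply: eq_bigr => p _; rewrite !dE.
have inj : injective (fun p : T * T => (p.2, p.1)) by move=> [? ?] [? ?] [-> ->].
rewrite [RHS](reindex_inj inj) /=; apply: eq_big => [p|p _]; last by rewrite !dE addrC.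
rewrite [e p.2 p.1]Qsym; case E: (e p.1 p.2) => //=.
have ne : p.1 != p.2 by apply/eqP => h; rewrite h Qirr in E.
have : (enum_rank p.1 : nat) != enum_rank p.2.
  by rewrite (inj_eq val_inj) (inj_eq enum_rank_inj).
move: (nat_of_ord (enum_rank p.1)) (nat_of_ord (enum_rank p.2)) => a b.
by move=> H; rewrite -leqNgt [(a <= b)%N]leq_eqVlt (negbTE H).
Qed.

Lemma full : \sum_(p | e p.1 p.2) S (D p.1.2) (D p.2.2) =
  ((S (n.+1%:R + m%:R) (n.+1%:R + m%:R) *+ m + S (n.+1%:R + m%:R) (n.+1%:R) *+ n.+1)
   + (S (n.+1%:R) (n.+1%:R + m%:R) + S (n.+1%:R) (n.+1%:R) *+ n) *+ n.+1) *+ m.+1.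
Proof.
rewrite (eq_bigl (fun p : T * T => xpredT p.1 && e p.1 p.2)) // -(pair_big_dep xpredT (fun x y => e x y) (fun x y => S (D x.2) (D y.2))) /=.
under eq_bigr => x _ do rewrite nbr.
rewrite -(pair_bigA _ (fun i k => \sum_(j | j != k) S (D k) (D j) +
  (if nat_of_ord k == 0%N then \sum_(i' | i' != i) S (D k) (D ord0) else 0))) /=.
under eq_bigr => i _ do under eq_bigr => k _ do rewrite [\sum_(i' | i' != i) _]sum_neq sc mulrSr addrK.
rewrite sc; congr (_ *+ _).
rewrite big_ord_recl /= sum_neq sum_D D0.
under eq_bigr => k _ do rewrite sum_neq sum_D Dl /=.
rewrite sc; congr (_ + _ *+ _); rewrite mulrSr; ring.
Qed.
End Q.

Lemma SAA (R : rcfType) (a : R) : 0 <= a -> S a a = a * Num.sqrt 2.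
Proof.
move=> a0; rewrite /S.
have -> : a ^+ 2 + a ^+ 2 = a ^+ 2 * 2 by ring.
by rewrite sqrtrM ?sqrtr_sqr ?ger0_norm ?sqr_ge0.
Qed.

Lemma SC (R : rcfType) (a b : R) : S a b = S b a.
Proof. by rewrite /S addrC. Qed.

Theorem mainTheorem2 (R : rcfType) (m n : nat) (hm : (1 <= m)%N) (hn : (2 <= n)%N) :
  sombor R (Qrel m n) =
    m%:R * ((m%:R + n%:R - 2) * (m%:R - 1) / 2 + (n%:R - 1) ^+ 2 * (n%:R / 2 - 1))
      * Num.sqrt 2
    + m%:R * (n%:R - 1) * Num.sqrt ((m%:R + n%:R - 2) ^+ 2 + (n%:R - 1) ^+ 2).
Proof.
case: m hm => // m _; case: n hn => [|[|n]] // _.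
have H := half R m n; rewrite full in H.
have -> : sombor R (Qrel m.+1 n.+2) = (sombor R (Qrel m.+1 n.+2) *+ 2) / 2.
  by rewrite mulr2n; field.
rewrite H.
have -> : (m.+1%:R + n.+2%:R - 2) ^+ 2 + (n.+2%:R - 1) ^+ 2 =
   (n.+1%:R + m%:R) ^+ 2 + (n.+1%:R : R) ^+ 2 by ring.
rewrite -/(S _ _) [S n.+1%:R _]/S addrC -/(S _ _) !SAA ?addr_ge0 ?ler0n //.
rewrite (SC n.+1%:R).
by field.
Qed.
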